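(* Let $\mathcal{G}=(\mathcal{V},\mathcal{E})$ and $\tilde{\mathcal{G}}=(\tilde{\mathcal{V}},\tilde{\mathcal{E}})$ be reaction networks such that $\mathcal{G}\sqsubseteq\tilde{\mathcal{G}}$. If $\tilde{\mathcal{G}}$ is endotactic, then $\mathcal{G}$ is endotactic. Moreover, if $\tilde{\mathcal{G}}$ is strongly endotactic, then $\mathcal{G}$ is strongly endotactic.
   Context: A reaction network (E-graph) $\mathcal{G}=(\mathcal{V},\mathcal{E})$ is a finite directed graph whose nodes are distinct elements of a finite set $Y\subset\mathbb{R}^d_{\ge 0}$, with $\mathcal{V}\neq\emptyset$, every node incident to at least one edge, and no edge from a node to itself. For an edge $e$, $\mathbf{s}(e)$ is its source node, $\mathbf{t}(e)$ its target, $\mathbf{v}(e)=\mathbf{t}(e)-\mathbf{s}(e)$. Given positive rate constants $\mathcal{K}=(k_e)$, $\mathcal{G}$ generates $\mathbf{f}_{\mathcal{G}(\mathcal{K})}(\mathbf{x})=\sum_{e}k_e\mathbf{x}^{\mathbf{s}(e)}\mathbf{v}(e)$ ($\mathbf{x}^{\mathbf{y}}=\prod_i x_i^{y_i}$, $0^0=1$). $\mathcal{G}\sqsubseteq\tilde{\mathcal{G}}$ means: for every positive rate constants $\mathcal{K}$ for $\mathcal{G}$ there exist positive rate constants $\tilde{\mathcal{K}}$ for $\tilde{\mathcal{G}}$ with $\mathbf{f}_{\tilde{\mathcal{G}}(\tilde{\mathcal{K}})}=\mathbf{f}_{\mathcal{G}(\mathcal{K})}$ identically. $\mathcal{G}$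 is endotactic if for every $\mathbf{w}\in\mathbb{R}^d$ and $e_i\in\mathcal{E}$ with $\mathbf{w}\cdot\mathbf{v}(e_i)<0$ there exists $e_j\in\mathcal{E}$ with $\mathbf{w}\cdot(\mathbf{s}(e_j)-\mathbf{s}(e_i))<0$ and $\mathbf{w}\cdot\mathbf{v}(e_j)>0$. It is strongly endotactic if moreover such $e_j$ can always be chosen so that additionally $\mathbf{w}\cdot(\mathbf{s}(e_j)-\mathbf{s}(e_k))\le 0$ for all $e_k\in\mathcal{E}$. *)

(* Defs.v *)
From HB Require Import structures.
From mathcomp Require Import all_boot all_order all_algebra.
From mathcomp Require Import all_classical all_reals.
From mathcomp Require Import exp.
Set Implicit Arguments. Unset Strict Implicit. Unset Printing Implicit Defensive.
Import Order.TTheory GRing.Theory Num.Theory.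
Local Open Scope ring_scope.

Section RN.
Variables (R : realType) (d : nat).

Notation vec := 'rV[R]_d.

(* An edge is a (source, target) pair; a reaction network is given by its
   duplicate-free list of edges (nodes = endpoints of edges, so every node is
   incident to an edge). *)
Definition edge := (vec * vec)%type.
Definition src (e : edge) : vec := e.1.
Definition tgt (e : edge) : vec := e.2.
Definition rvec (e : edge) : vec := tgt e - src e.

Definition dot (w v : vec) : R := \sum_(i < d) w 0 i * v 0 i.

Definition nonneg_vec (y : vec) : Prop := forall i, 0 <= y 0 i.

Definition is_network (E : seq edge) : Prop :=
  [/\ E != [::], uniq E,
      forall e, e \in E -> src e != tgt e &
      forall e, e \in E -> nonneg_vec (src e) /\ nonneg_vec (tgt e)].

(* x^y = prod_i x_i^{y_i}, with 0^0 = 1 (powR convention) *)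
Definition monom (x y : vec) : R := \prod_(i < d) powR (x 0 i) (y 0 i).

Definition rates_pos (E : seq edge) (k : edge -> R) : Prop :=
  forall e, e \in E -> 0 < k e.

Definition ma_field (E : seq edge) (k : edge -> R) (x : vec) : vec :=
  \sum_(e <- E) (k e * monom x (src e)) *: rvec e.

Definition realizable_by (E Et : seq edge) : Prop :=
  forall k, rates_pos E k ->
    exists kt, rates_pos Et kt /\
      forall x, nonneg_vec x -> ma_field Et kt x = ma_field E k x.

Definition endotactic (E : seq edge) : Prop :=
  forall (w : vec) ei, ei \in E -> dot w (rvec ei) < 0 ->
    exists ej, [/\ ej \in E, dot w (src ej - src ei) < 0 & dot w (rvec ej) > 0].

Definition strongly_endotactic (E : seq edge) : Prop :=
  forall (w : vec) ei, ei \in E -> dot w (rvec ei) < 0 ->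
    exists ej, [/\ ej \in E, dot w (src ej - src ei) < 0, dot w (rvec ej) > 0 &
                   forall ek, ek \in E -> dot w (src ej - src ek) <= 0].

End RN.

(* Main.v *)
Require Import Defs.
From mathcomp Require Import all_boot all_order all_algebra.
From mathcomp Require Import all_classical all_reals.
From mathcomp Require Import sequences exp lra ring.
Import Order.TTheory GRing.Theory Num.Theory.
Local Open Scope ring_scope.

Set Implicit Arguments. Unset Strict Implicit.
Section Aux.
Variable R : realType.

Lemma minimizer (T : eqType) (s : seq T) (P : pred T) (f : T -> R) :
  has P s -> exists2 x, x \in s & P x /\ forall y, y \in s -> P y -> f x <= f y.
Proof.
elim: s => [//|a s IH] /=.
case Ps: (has P s).
  move=> _; have [m ms [Pm Hm]] := IH Ps.
  case Pa: (P a); case: (leP (f a) (f m)) => Ham.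
  - exists a; first by rewrite inE eqxx.
    split=> // y; rewrite inE => /orP[/eqP->//|ys] Py.
    exact: le_trans Ham (Hm y ys Py).
  - exists m; first by rewrite inE ms orbT.
    split=> // y; rewrite inE => /orP[/eqP->|ys] Py; last exact: Hm.
    exact: ltW.
  - exists m; first by rewrite inE ms orbT.
    split=> // y; rewrite inE => /orP[/eqP->|ys] Py; last exact: Hm.
    by rewrite Py in Pa.
  - exists m; first by rewrite inE ms orbT.
    split=> // y; rewrite inE => /orP[/eqP->|ys] Py; last exact: Hm.
    by rewrite Py in Pa.
rewrite orbF => Pa; exists a; first by rewrite inE eqxx.
split=> // y; rewrite inE => /orP[/eqP->//|ys] Py.
by move/negbT/hasPn: Ps => /(_ y ys); rewrite Py.
Qed.

Lemma single_small (a dd eps t : R) : 0 < dd -> 0 < eps ->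
  t <= - (2 * `|a|) / (eps * dd) -> `|a| * expR (t * dd) <= eps / 2.
Proof.
move=> hd he ht.
have h1 : t * (eps * dd) <= - (2 * `|a|).
  have -> : - (2 * `|a|) = (- (2 * `|a|) / (eps * dd)) * (eps * dd).
    field; rewrite ?gt_eqF // ?mulf_neq0 // ?gt_eqF //.
  by rewrite ler_wpM2r // ?mulr_ge0 // ltW.
have hF := expR_ge1Dx (- (t * dd)).
have hEF : expR (t * dd) * expR (- (t * dd)) = 1 by rewrite -expRD subrr expR0.
have hE := expR_gt0 (t * dd).
have ha := normr_ge0 a.
have h3 : eps * (1 - t * dd) <= eps * expR (- (t * dd)) by rewrite ler_pM2l.
have h2 : 2 * `|a| <= eps * expR (- (t * dd)).
  have : t * (eps * dd) = eps * (t * dd) by ring.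
  nra.
have h4 : 2 * `|a| * expR (t * dd) <= eps * expR (- (t * dd)) * expR (t * dd).
  by rewrite ler_pM2r.
have : eps * expR (- (t * dd)) * expR (t * dd) = eps by rewrite -mulrA [X in eps * X]mulrC hEF mulr1.
lra.
Qed.

Lemma tail_small (s : seq (R * R)) (cm : R) :
  (forall p, p \in s -> cm <= p.1) -> forall eps, 0 < eps ->
  exists T, forall t, t <= T ->
    `|\sum_(p <- s | p.1 != cm) p.2 * expR (t * (p.1 - cm))| <= eps.
Proof.
elim: s => [|p s IH] hs eps he.
  by exists 0 => t _; rewrite big_nil normr0 ltW.
have [T1 HT1] := IH (fun q qs => hs q (@mem_behead _ (p :: s) q qs)) (eps / 2) ltac:(lra).
have hp : cm <= p.1 by apply: hs; rewrite inE eqxx.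
case: (eqVneq p.1 cm) => [hpe|hne].
  by exists T1 => t /HT1; rewrite big_cons hpe eqxx /=; lra.
have hd : 0 < p.1 - cm by rewrite subr_gt0 lt_neqAle hp andbT; rewrite eq_sym.
exists (Num.min T1 (- (2 * `|p.2|) / (eps * (p.1 - cm)))) => t.
rewrite le_min => /andP[/HT1 h1 ht]; rewrite big_cons hne /=.
have := @single_small p.2 _ _ _ hd he ht.
have := ler_normD (p.2 * expR (t * (p.1 - cm)))
  (\sum_(p <- s | p.1 != cm) p.2 * expR (t * (p.1 - cm))).
rewrite normrM (ger0_norm (ltW (expR_gt0 _))); lra.
Qed.

Lemma expind n (s : seq (R * R)) : (size s <= n)%N ->
  (forall t, \sum_(p <- s) p.2 * expR (t * p.1) = 0) ->
  forall c0, \sum_(p <- s | p.1 == c0) p.2 = 0.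
Proof.
elim: n s => [|n IHn] s.
  by rewrite leqn0 => /nilP -> _ c0; rewrite big_nil.
case: s => [|q s0] hsz hs c0; first by rewrite big_nil.
set s := q :: s0.
have [pm pms [_ hm]] := @minimizer _ s predT (fun p => p.1) (introT hasP (ex_intro2 _ _ q (mem_head q s0) isT)).
set cm := pm.1.
set A := \sum_(p <- s | p.1 == cm) p.2.
have hA : forall t, A = - \sum_(p <- s | p.1 != cm) p.2 * expR (t * (p.1 - cm)).
  move=> t.
  have h0 : \sum_(p <- s) p.2 * expR (t * (p.1 - cm)) = 0.
    have -> : \sum_(p <- s) p.2 * expR (t * (p.1 - cm)) =
      expR (- (t * cm)) * \sum_(p <- s) p.2 * expR (t * p.1).
      rewrite mulr_sumr; apply: eq_bigr => p _; rewrite mulrCA -expRD; congr (_ * expR _); ring.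
    by rewrite hs mulr0.
  rewrite (bigID (fun p : R * R => p.1 == cm)) /= in h0.
  have -> : A = \sum_(p <- s | p.1 == cm) p.2 * expR (t * (p.1 - cm)).
    by apply: eq_bigr => p /eqP ->; rewrite subrr mulr0 expR0 mulr1.
  by apply/eqP; rewrite -addr_eq0; apply/eqP.
have A0 : A = 0.
  apply/eqP; apply/negPn/negP => hA0.
  have hpos : 0 < `|A| / 2 by rewrite divr_gt0 // normr_gt0.
  have [T HT] := @tail_small s cm (fun p ps => hm p ps isT) _ hpos.
  have := HT T (lexx _); rewrite -normrN -hA.
  have := normr_gt0 A; rewrite hA0 => h; lra.
set s' := [seq p <- s | p.1 != cm].
have hsz' : (size s' <= n)%N.
  have hlt : (count (fun p : R * R => p.1 != cm) s < size s)%N.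
    rewrite -(count_predC (fun p : R * R => p.1 != cm) s) -[X in (X < _)%N]addn0 ltn_add2l.
    by rewrite -has_count; apply/hasP; exists pm => //=; rewrite negbK.
  by rewrite size_filter -ltnS (leq_trans hlt hsz).
have hs' : forall t, \sum_(p <- s') p.2 * expR (t * p.1) = 0.
  move=> t; rewrite big_filter.
  have := hs t; rewrite (bigID (fun p : R * R => p.1 == cm)) /=.
  have -> : \sum_(p <- s | p.1 == cm) p.2 * expR (t * p.1) = A * expR (t * cm).
    by rewrite /A mulr_suml; apply: eq_bigr => p /eqP ->.
  by rewrite A0 mul0r add0r.
case: (eqVneq c0 cm) => [->//|hc].
rewrite -[RHS](IHn s' hsz' hs' c0) big_filter_cond; apply: eq_bigl => p.
by case: (eqVneq p.1 c0) => [->|]; rewrite ?hc ?andbF.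
Qed.
End Aux.

Section Main.
Variables (R : realType) (d : nat).
Local Notation edge := (edge R d).
Local Notation vec := 'rV[R]_d.

Lemma dot_sum (u : vec) (L : seq edge) (F : edge -> vec) :
  dot u (\sum_(e <- L) F e) = \sum_(e <- L) dot u (F e).
Proof.
rewrite /dot; under eq_bigr => i _ do rewrite summxE mulr_sumr.
exact: exchange_big.
Qed.

Lemma dotZ (u v : vec) (a : R) : dot u (a *: v) = a * dot u v.
Proof. by rewrite /dot mulr_sumr; apply: eq_bigr => i _; rewrite mxE; ring. Qed.

Lemma dotB (u v v' : vec) : dot u (v - v') = dot u v - dot u v'.
Proof. by rewrite /dot -sumrN -big_split /=; apply: eq_bigr => i _; rewrite !mxE; ring. Qed.

Lemma dotNl (u v : vec) : dot (- u) v = - dot u v.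
Proof. by rewrite /dot -sumrN; apply: eq_bigr => i _; rewrite !mxE; ring. Qed.

Lemma dot_self_gt0 (v : vec) : v != 0 -> 0 < dot v v.
Proof.
move=> hv.
have [i hi] : exists i, v 0 i != 0.
  case: (pselect (exists i, v 0 i != 0)) => // hn.
  exfalso; move/eqP: hv; apply; apply/rowP => i; rewrite mxE.
  by apply/eqP; apply/negPn/negP => hi; apply: hn; exists i.
rewrite /dot (bigD1 i) //=.
have h1 : 0 < v 0 i * v 0 i by rewrite -expr2 lt_def sqrf_eq0 hi sqr_ge0.
have h2 : 0 <= \sum_(j < d | j != i) v 0 j * v 0 j.
  by apply: sumr_ge0 => j _; rewrite -expr2 sqr_ge0.
lra.
Qed.

Definition xt (w : vec) (t : R) : vec := \row_i expR (t * w 0 i).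

Lemma xt_nonneg w t : nonneg_vec (xt w t).
Proof. by move=> i; rewrite mxE expR_ge0. Qed.

Lemma monom_xt w t (y : vec) : monom (xt w t) y = expR (t * dot w y).
Proof.
rewrite /monom /dot mulr_sumr expR_sum; apply: eq_bigr => i _.
rewrite mxE /powR (gt_eqF (expR_gt0 _)) expRK; congr expR; ring.
Qed.

Lemma dot_field (u w : vec) t (L : seq edge) k :
  dot u (ma_field L k (xt w t)) =
  \sum_(e <- L) (k e * dot u (rvec e)) * expR (t * dot w (src e)).
Proof.
rewrite /ma_field dot_sum; apply: eq_bigr => e _.
by rewrite dotZ monom_xt; ring.
Qed.

Definition G (L : seq edge) (k : edge -> R) (w : vec) (c : R) (u : vec) :=
  \sum_(e <- L | dot w (src e) == c) k e * dot u (rvec e).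

Lemma KL (E Et : seq edge) k : realizable_by E Et -> rates_pos E k ->
  exists kt, rates_pos Et kt /\ forall w c u, G Et kt w c u = G E k w c u.
Proof.
move=> hr hk; have [kt [hkt hf]] := hr k hk.
exists kt; split => // w c u.
set s := [seq (dot w (src e), kt e * dot u (rvec e)) | e <- Et] ++
         [seq (dot w (src e), - (k e * dot u (rvec e))) | e <- E].
have := @expind R (size s) s (leqnn _) _ c.
rewrite big_cat !big_map /= sumrN /G => h; apply/eqP; rewrite -subr_eq0; apply/eqP; apply: h.
move=> t; rewrite big_cat !big_map /=.
have := congr1 (dot u) (hf (xt w t) (xt_nonneg w t)).
rewrite !dot_field => ->; rewrite -big_split /=; apply: big1 => e _; ring.
Qed.

Lemma choose_k (L : seq edge) e0 (phi : edge -> R) (P : pred edge) :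
  uniq L -> e0 \in L -> P e0 -> phi e0 < 0 ->
  exists k, rates_pos L k /\ \sum_(e <- L | P e) k e * phi e < 0.
Proof.
move=> hu he0 hP hphi.
set S := \sum_(e <- L | e != e0) (if P e then phi e else 0).
set M := (`|S| + 1) / (- phi e0).
have hM : 0 < M by rewrite divr_gt0 // ?oppr_gt0 //; have := normr_ge0 S; lra.
exists (fun e => if e == e0 then M else 1); split.
  by move=> e _; case: ifP.
rewrite big_mkcond (bigD1_seq e0) //= eqxx hP.
have -> : \sum_(i <- L | i != e0) (if P i then (if i == e0 then M else 1) * phi i else 0) = S.
  by apply: eq_bigr => e /negbTE ->; rewrite mul1r.
have : M * (- phi e0) = `|S| + 1 by rewrite /M divfK // oppr_eq0 lt_eqF.
have := ler_norm S; lra.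
Qed.

Lemma neg_ex (L : seq edge) k (phi : edge -> R) (P : pred edge) :
  rates_pos L k -> \sum_(e <- L | P e) k e * phi e < 0 ->
  exists e, [/\ e \in L, P e & phi e < 0].
Proof.
move=> hk hs; case: (pselect (exists e, [/\ e \in L, P e & phi e < 0])) => // hn.
exfalso; move: hs; apply/negP; rewrite -leNgt big_seq_cond.
apply: sumr_ge0 => e /andP[eL Pe]; apply: mulr_ge0; first exact/ltW/hk.
by rewrite leNgt; apply/negP => h; apply: hn; exists e.
Qed.

Lemma pos_ex (L : seq edge) k (phi : edge -> R) (P : pred edge) :
  rates_pos L k -> 0 < \sum_(e <- L | P e) k e * phi e ->
  exists e, [/\ e \in L, P e & 0 < phi e].
Proof.
move=> hk hs; have [|e [eL Pe he]] := @neg_ex L k (fun e => - phi e) P hk.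
  have -> : \sum_(e <- L | P e) k e * - phi e = - \sum_(e <- L | P e) k e * phi e.
    by rewrite -sumrN; apply: eq_bigr => e _; rewrite mulrN.
  by rewrite oppr_lt0.
by exists e; split => //; rewrite -oppr_lt0.
Qed.

Lemma pos_sum (L : seq edge) k (phi : edge -> R) (P : pred edge) e0 :
  uniq L -> rates_pos L k -> (forall e, e \in L -> P e -> 0 <= phi e) ->
  e0 \in L -> P e0 -> 0 < phi e0 ->
  0 < \sum_(e <- L | P e) k e * phi e.
Proof.
move=> hu hk hge he0 hP hphi.
rewrite big_seq_cond big_mkcond (bigD1_seq e0) //= he0 hP /=.
have h1 : 0 < k e0 * phi e0 by rewrite mulr_gt0 // hk.
have h2 : 0 <= \sum_(i <- L | i != e0) (if (i \in L) && P i then k i * phi i else 0).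
  apply: sumr_ge0 => e _; case: ifP => // /andP[eL Pe].
  by rewrite mulr_ge0 ?hge // ltW // hk.
lra.
Qed.

End Main.

Unset Implicit Arguments.

Theorem lemma3 (R : realType) (d : nat) (E Et : seq (edge R d)) :
  is_network E -> is_network Et -> realizable_by E Et ->
  (endotactic Et -> endotactic E) /\
  (strongly_endotactic Et -> strongly_endotactic E).
Proof.
move=> [_ uE srcE _] [_ uEt _ _] hr; split.
- move=> hEt w ei hei hneg.
  set c0 := dot w (src ei).
  case: (pselect (exists ej, [/\ ej \in E, dot w (src ej - src ei) < 0 & dot w (rvec ej) > 0])) => // hno.
  exfalso.
  have [k [hk hs]] := @choose_k R d E ei (fun e => dot w (rvec e))
     (fun e => dot w (src e) == c0) uE hei (eqxx _) hneg.
  have [kt [hkt HG]] := KL hr hk.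
  have hG : G Et kt w c0 w < 0 by rewrite HG.
  have [e1 [e1E /eqP e1l e1n]] := neg_ex hkt (hG : \sum_(e <- Et | dot w (src e) == c0) kt e * dot w (rvec e) < 0).
  have [es esE [/andP [esl esn] hmin]] := @minimizer R _ Et
     (fun e => (dot w (src e) <= c0) && (dot w (rvec e) < 0)) (fun e => dot w (src e))
     ltac:(by apply/hasP; exists e1 => //; rewrite e1l lexx e1n).
  have [e' [e'E e'l e'p]] := hEt w es esE esn.
  rewrite dotB subr_lt0 in e'l.
  set c' := dot w (src e') in e'l.
  have hc' : c' < c0 by apply: lt_le_trans e'l esl.
  have hGE : ~~ (0 < G E k w c' w).
    apply/negP; rewrite /G => /(pos_ex hk) [e2 [e2E /eqP e2l e2p]].
    by apply: hno; exists e2; split => //; rewrite dotB e2l subr_lt0.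
  have hGEt : 0 < G Et kt w c' w.
    rewrite /G; apply: (@pos_sum R d Et kt (fun e => dot w (rvec e)) (fun e => dot w (src e) == c') e' uEt hkt _ e'E (eqxx _) e'p) => e eE /eqP el.
    rewrite leNgt; apply/negP => en.
    have := hmin e eE; rewrite el (ltW hc') en => /(_ isT).
    by rewrite leNgt e'l.
  by move: hGE; rewrite -HG hGEt.
- move=> hEt w ei hei hneg.
  set c0 := dot w (src ei).
  have [k [hk hs]] := @choose_k R d E ei (fun e => dot w (rvec e))
     (fun e => dot w (src e) == c0) uE hei (eqxx _) hneg.
  have [kt [hkt HG]] := KL hr hk.
  have hG : G Et kt w c0 w < 0 by rewrite HG.
  have [e1 [e1E /eqP e1l e1n]] := neg_ex hkt (hG : \sum_(e <- Et | dot w (src e) == c0) kt e * dot w (rvec e) < 0).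
  have [ej' [ej'E hl hp hmin]] := hEt w e1 e1E e1n.
  rewrite dotB e1l subr_lt0 in hl.
  set mt := dot w (src ej') in hl hmin.
  have hminEt : forall e, e \in Et -> mt <= dot w (src e).
    by move=> e eE; have := hmin e eE; rewrite dotB subr_le0.
  have hGEt : 0 < G Et kt w mt w.
    rewrite /G; apply: (@pos_sum R d Et kt (fun e => dot w (rvec e)) (fun e => dot w (src e) == mt) ej' uEt hkt _ ej'E (eqxx _) hp) => e eE /eqP el.
    rewrite leNgt; apply/negP => en.
    have [e'' [e''E e''l _]] := hEt w e eE en.
    rewrite dotB subr_lt0 el in e''l.
    by have := hminEt e'' e''E; rewrite leNgt e''l.
  rewrite HG in hGEt.
  have [e2 [e2E /eqP e2l e2p]] := pos_ex hk (hGEt : 0 < \sum_(e <- E | dot w (src e) == mt) k e * dot w (rvec e)).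
  have [e3 e3E [_ hm3]] := @minimizer R _ E predT (fun e => dot w (src e))
     (introT hasP (ex_intro2 _ _ ei hei isT)).
  have hm : dot w (src e3) = mt.
    have h32 := hm3 e2 e2E isT; rewrite e2l in h32.
    apply/eqP; rewrite eq_le h32 /= leNgt; apply/negP => hlt.
    have hv : rvec e3 != 0 by rewrite /rvec subr_eq0 eq_sym srcE.
    have [k' [hk' hs']] := @choose_k R d E e3 (fun e => dot (- rvec e3) (rvec e))
       (fun e => dot w (src e) == dot w (src e3)) uE e3E (eqxx _)
       ltac:(by rewrite /= dotNl oppr_lt0 dot_self_gt0).
    have [kt' [hkt' HG']] := KL hr hk'.
    have : G Et kt' w (dot w (src e3)) (- rvec e3) = 0.
      apply: big1_seq => e /andP[/eqP el eE].
      by have := hminEt e eE; rewrite el leNgt hlt.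
    by rewrite HG' => h; move: hs'; rewrite -/(G E k' w _ _) h ltxx.
  exists e2; split => //.
  + by rewrite dotB e2l subr_lt0.
  + by move=> ek ekE; rewrite dotB subr_le0 e2l -hm hm3.
Qed.
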